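(* Let $\rho_1\in(0,1)$, $\rho_2\in(0,1-\rho_1)$ and $\eta\sim\mu^{\rho_1,\rho_2}$ constructed from $(a(i))$, $(s(i))$ as in the context. Then for any $x\in\mathbb{Z}$, \[ h^{\rho_1}(x,0)=\hat h^{\rho_1}(x,0)+\sup_{j\ge0}\{h^{\rho_1+\rho_2}(j,0)-\hat h^{\rho_1}(j,0)\}-\sup_{j\ge x}\{h^{\rho_1+\rho_2}(j,0)-h^{\rho_1+\rho_2}(x,0)-(\hat h^{\rho_1}(j,0)-\hat h^{\rho_1}(x,0))\}. \]
   Context: Queueing construction: $(a(i))_{i\in\mathbb{Z}}$, $(s(i))_{i\in\mathbb{Z}}$ independent families of i.i.d. Bernoulli variables with parameters $\rho_1$, $\rho_1+\rho_2$; $\mathcal{A}_{[i,j]}=\sum_{k=i}^ja(k)$, $\mathcal{S}_{[i,j]}=\sum_{k=i}^js(k)$ (empty sums $0$); $Q_i=\sup_{j\ge i-1}(\mathcal{A}_{[i,j]}-\mathcal{S}_{[i,j]})$; $d(i)=1$ iff $s(i)=1$ and ($a(i)=1$ or $Q_{i+1}\ge1$). The configuration $\eta$ has $\eta(i)=1$ if $d(i)=1$, $\eta(i)=2$ if $s(i)=1,d(i)=0$, $\eta(i)=+\infty$ otherwise; its law is $\mu^{\rho_1,\rho_2}$. For a $\{0,1\}$-valued configuration $\zeta$ define its height profile $g(0)=0$, $g(x)=\sum_{i=1}^x(1-2\zeta(i))$ for $x\ge1$, $g(x)=-\sum_{i=x+1}^0(1-2\zeta(i))$ for $x\le-1$.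 Then $h^{\rho_1}(\cdot,0)$, $h^{\rho_1+\rho_2}(\cdot,0)$, $\hat h^{\rho_1}(\cdot,0)$ are the height profiles of $\zeta=d$, $\zeta=s$, $\zeta=a$ respectively. *)

(* Defs.v *)
From HB Require Import structures.
From mathcomp Require Import all_boot all_order all_algebra.
From mathcomp Require Import all_classical all_reals all_analysis.
Set Implicit Arguments. Unset Strict Implicit. Unset Printing Implicit Defensive.
Import Order.TTheory GRing.Theory Num.Theory.
Local Open Scope classical_set_scope.
Local Open Scope ring_scope.

Definition isum (f : int -> int) (i j : int) : int :=
  if i <= j then \sum_(k < absz (j - i + 1)) f (i + k%:Z) else 0.

Definition AS (a s : int -> bool) (i j : int) : int :=
  isum (fun k => (a k)%:Z) i j - isum (fun k => (s k)%:Z) i j.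

Definition Qlen (R : realType) (a s : int -> bool) (i : int) : \bar R :=
  ereal_sup [set (((AS a s i j)%:~R : R)%:E) | j in [set j : int | i - 1 <= j]].

Definition dep (R : realType) (a s : int -> bool) (i : int) : bool :=
  s i && (a i || `[< (1 <= Qlen R a s (i + 1))%E >]).

Definition height (zeta : int -> bool) (x : int) : int :=
  if 0 <= x then isum (fun k => 1 - 2 * (zeta k)%:Z) 1 x
  else - isum (fun k => 1 - 2 * (zeta k)%:Z) (x + 1) 0.

Definition indep_bool_family (d : measure_display) (T : measurableType d)
  (R : realType) (P : probability T R) (I : eqType) (X : I -> T -> bool) : Prop :=
  forall (J : seq I) (b : I -> bool), uniq J ->
    P (\bigcap_(i in [set` J]) [set w | X i w = b i]) =
    (\prod_(i <- J) P [set w | X i w = b i])%E.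

(* Main.v *)
Require Import Defs.
From HB Require Import structures.
From mathcomp Require Import all_boot all_order all_algebra.
From mathcomp Require Import all_classical all_reals all_analysis.
From mathcomp Require Import zify ring lra.
Import Order.TTheory GRing.Theory Num.Theory.
Local Open Scope classical_set_scope.
Local Open Scope ring_scope.

Section Isum.
Variable f : int -> int.

Lemma isum_nat (i : int) (n : nat) : isum f i (i + n%:Z - 1) = \sum_(k < n) f (i + k%:Z).
Proof.
rewrite /isum; case: n => [|n].
  by rewrite big_ord0 ifF //; apply/negbTE; rewrite -ltNge; lia.
rewrite ifT; last by lia.
have -> : absz (i + n.+1%:Z - 1 - i + 1) = n.+1 by lia.
by [].
Qed.

Lemma isum_empty (i : int) : isum f i (i - 1) = 0.
Proof. by rewrite /isum ifF //; apply/negbTE; rewrite -ltNge; lia. Qed.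

Lemma isum_param (i j : int) : i - 1 <= j -> exists n : nat, j = i + n%:Z - 1.
Proof. by move=> h; exists (absz (j - i + 1)); lia. Qed.

Lemma isum_recr (i j : int) : i - 1 <= j -> isum f i (j + 1) = isum f i j + f (j + 1).
Proof.
move=> /isum_param [n ->].
have -> : i + n%:Z - 1 + 1 = i + n.+1%:Z - 1 by lia.
rewrite !isum_nat big_ord_recr /=; congr (_ + f _); lia.
Qed.

Lemma isum_recl (i j : int) : i <= j -> isum f i j = f i + isum f (i + 1) j.
Proof.
move=> h; have [n ->] : exists n : nat, j = i + n.+1%:Z - 1.
  have [m hm] : exists n : nat, j = (i + 1) + n%:Z - 1 by apply: isum_param; lia.
  by exists m; lia.
have -> : i + n.+1%:Z - 1 = (i + 1) + n%:Z - 1 by lia.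
rewrite isum_nat.
have -> : i + 1 + n%:Z - 1 = i + n.+1%:Z - 1 by lia.
rewrite isum_nat big_ord_recl addr0; congr (_ + _).
by apply: eq_bigr => k _; congr f; rewrite lift0; lia.
Qed.

End Isum.

Lemma height0 z : height z 0 = 0.
Proof. by rewrite /height /= (_ : 0 = 1 - 1) // isum_empty. Qed.

Lemma height_step z x :
  height z (x + 1) = height z x + (1 - 2 * (z (x + 1))%:Z).
Proof.
rewrite /height.
case: (leP 0 x) => hx.
  rewrite ifT; last by lia.
  by rewrite isum_recr //; lia.
case: (leP (-1) x) => hx1.
  have -> : x = -1 by lia.
  set g := (fun k : int => 1 - 2 * (z k)%:Z).
  have e1 : isum g 1 0 = 0 := isum_empty g 1.
  rewrite (_ : -1 + 1 = 0) // /= e1 isum_recl // e1; rewrite /g; ring.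
rewrite ifF; last by apply/negbTE; lia.
rewrite (@isum_recl _ (x + 1) 0); last by lia.
by ring.
Qed.

Lemma height_diff z x (n : nat) :
  height z (x + n%:Z) - height z x = isum (fun k => 1 - 2 * (z k)%:Z) (x + 1) (x + n%:Z).
Proof.
elim: n => [|n IH].
  by rewrite addr0 subrr -{2}(addrK 1 x) isum_empty.
have -> : x + n.+1%:Z = (x + n%:Z) + 1 by lia.
rewrite height_step isum_recr; last by lia.
by rewrite -IH; ring.
Qed.

Section ASsec.
Variables (a s : int -> bool).

Lemma AS_empty (i : int) : AS a s i (i - 1) = 0.
Proof. by rewrite /AS !isum_empty subrr. Qed.

Lemma AS_recr (i j : int) : i - 1 <= j ->
  AS a s i (j + 1) = AS a s i j + ((a (j + 1))%:Z - (s (j + 1))%:Z).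
Proof. by move=> h; rewrite /AS !isum_recr //; ring. Qed.

Lemma AS_recl (i j : int) : i <= j ->
  AS a s i j = ((a i)%:Z - (s i)%:Z) + AS a s (i + 1) j.
Proof. by move=> h; rewrite /AS (@isum_recl _ i j h) (@isum_recl _ i j h); ring. Qed.

Lemma AS_split (i k : int) (n : nat) : i - 1 <= k ->
  AS a s i (k + n%:Z) = AS a s i k + AS a s (k + 1) (k + n%:Z).
Proof.
move=> h; elim: n => [|n IH].
  by rewrite addr0 -{4}(addrK 1 k) AS_empty addr0.
have -> : k + n.+1%:Z = (k + n%:Z) + 1 by lia.
rewrite !AS_recr; try lia; by rewrite IH; ring.
Qed.

Lemma AS_bound (i : int) (n : nat) :
  - (n%:Z) <= AS a s i (i + n%:Z - 1) <= n%:Z.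
Proof.
elim: n => [|n IH].
  by rewrite addr0 AS_empty.
have -> : i + n.+1%:Z - 1 = (i + n%:Z - 1) + 1 by lia.
rewrite AS_recr; last by lia.
by move: IH; case: (a _); case: (s _); lia.
Qed.

Lemma hAS (x j : int) : x <= j ->
  height s j - height s x - (height a j - height a x) = 2 * AS a s (x + 1) j.
Proof.
move=> h; have [n ->] : exists n : nat, j = x + n%:Z by exists (absz (j - x)); lia.
elim: n => [|n IH].
  rewrite addr0 (_ : AS a s (x + 1) x = 0); first ring.
  by rewrite -{2}(addrK 1 x) AS_empty.
have -> : x + n.+1%:Z = (x + n%:Z) + 1 by lia.
rewrite !height_step AS_recr; last by lia.
by move: IH; case: (a _); case: (s _); lia.
Qed.

End ASsec.

Lemma int_max (Pp : int -> Prop) (M v0 : int) : Pp v0 -> (forall v, Pp v -> v <= M) ->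
  exists m, Pp m /\ (forall v, Pp v -> v <= m).
Proof.
move=> P0 ub.
have key : forall n : nat, (exists v, Pp v /\ M - n%:Z <= v) ->
    exists m, Pp m /\ forall v, Pp v -> v <= m.
  elim=> [|n IH] [v [Pv hv]].
    exists v; split=> // u Pu; have := ub _ Pu; have := ub _ Pv; lia.
  case: (pselect (exists v, Pp v /\ M - n%:Z <= v)) => [h|h]; first exact: IH.
  exists v; split => // u Pu; rewrite leNgt; apply/negP => uv; apply: h.
  by exists u; split => //; lia.
apply: (key (absz (M - v0))); exists v0; split => //.
have := ub _ P0; lia.
Qed.

Lemma esup_att (R : realType) (D : set int) (g : int -> int) (m : int) :
  (exists2 j, D j & g j = m) -> (forall j, D j -> g j <= m) ->
  ereal_sup [set ((g j)%:~R : R)%:E | j in D] = ((m%:~R : R))%:E.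
Proof.
move=> [j Dj gj] ub; apply/eqP; rewrite eq_le; apply/andP; split.
  by apply: ub_ereal_sup => _ [k Dk <-]; rewrite lee_fin ler_int; exact: ub.
by apply: ereal_sup_ubound; exists j => //; rewrite gj.
Qed.

Lemma int_const (G : int -> int) : (forall x, G (x + 1) = G x) -> forall x, G x = G 0.
Proof.
move=> h; case=> n.
  elim: n => // n IH; rewrite -IH (_ : Posz n.+1 = n%:Z + 1) ?h //; lia.
rewrite NegzE; elim: n => [|n IH].
  by rewrite -h; congr G.
rewrite -IH -h; congr G; lia.
Qed.

Lemma det_main (R : realType) (a s : int -> bool) (J : nat) :
  (forall j : nat, (J <= j)%N -> AS a s 1 j%:Z < 0) ->
  forall x : int,
    (((height (dep R a s) x)%:~R : R)%:E =
       ((height a x)%:~R : R)%:E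
       + ereal_sup [set (((height s j - height a j)%:~R : R)%:E) | j in [set j : int | (0 <= j)%R]]
       - ereal_sup [set (((height s j - height s x - (height a j - height a x))%:~R : R)%:E)
                     | j in [set j : int | (x <= j)%R]])%E.
Proof.
move=> HJ x.
have bnd : forall i, exists M, forall j, i - 1 <= j -> AS a s i j <= M.
  move=> i; set Nn : nat := maxn J (maxn (absz i) 1); set N : int := Nn%:Z.
  have iN : i <= N by rewrite /N /Nn; lia.
  have N1 : 1 <= N by rewrite /N /Nn; lia.
  have JN : (J <= Nn)%N by rewrite /Nn; lia.
  exists (2 * N - i + 1) => j hj.
  case: (leP j N) => hjN.
    have [n hn] := @isum_param i j hj.
    have := AS_bound a s i n; rewrite -hn; lia.
  have [n hn] : exists n : nat, j = N + n%:Z by exists (absz (j - N)); lia.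
  have i1 : i - 1 <= N by lia.
  have i2 : 1 - 1 <= N by lia.
  have e1 := AS_split a s i N n i1.
  have e2 := AS_split a s 1 N n i2.
  have h1 : AS a s 1 (N + n%:Z) < 0.
    have := HJ (Nn + n)%N (leq_trans JN (leq_addr _ _)); by rewrite PoszD.
  have b1 := AS_bound a s i (absz (N - i + 1)).
  have b2 := AS_bound a s 1 Nn.
  rewrite (_ : i + (absz (N - i + 1))%:Z - 1 = N) in b1; last by lia.
  rewrite (_ : 1 + Nn%:Z - 1 = N) in b2; last by rewrite /N; lia.
  rewrite e2 in h1; rewrite hn e1; lia.
have qex : forall i, exists m, (exists2 j, i - 1 <= j & AS a s i j = m) /\
    (forall j, i - 1 <= j -> AS a s i j <= m).
  move=> i; have [M HM] := bnd i.
  have P0 : exists2 j, i - 1 <= j & AS a s i j = 0.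
    by exists (i - 1) => //; apply: AS_empty.
  have [m [[j hj1 hj2] hm]] := @int_max (fun v => exists2 j, i - 1 <= j & AS a s i j = v) M 0
     P0 (fun v hv => let: ex_intro2 j hj e := hv in (ltac:(rewrite -e; exact: HM j hj))).
  exists m; split; first by exists j.
  by move=> j' hj'; apply: hm; exists j'.
case: (choice qex) => q hq.
have QE : forall i, Qlen R a s i = ((q i)%:~R : R)%:E.
  move=> i; rewrite /Qlen; have [[j hj e] hm] := hq i.
  by apply: esup_att => //; exists j.
have depE : forall i, dep R a s i = s i && (a i || (1 <= q (i + 1))).
  move=> i; rewrite /dep QE; congr (_ && (_ || _)).
  by apply/asboolP/idP; rewrite lee_fin ler1z.
have q0 : forall i, 0 <= q i.
  move=> i; have [_ hm] := hq i; rewrite -(AS_empty a s i); exact: hm.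
have key : forall i, q i - q (i + 1) = (a i)%:Z - (dep R a s i)%:Z.
  move=> i; rewrite depE.
  have [[j0 hj0 e0] hm0] := hq i.
  have [[j1 hj1 e1] hm1] := hq (i + 1).
  have ge1 : (a i)%:Z - (s i)%:Z + q (i + 1) <= q i.
    rewrite -e1 -AS_recl; last by lia.
    by apply: hm0; lia.
  have alt : q i = 0 \/ q i <= (a i)%:Z - (s i)%:Z + q (i + 1).
    case: (leP j0 (i - 1)) => hj.
      by left; rewrite -e0 (_ : j0 = i - 1) ?AS_empty //; lia.
    right; rewrite -e0 AS_recl; last by lia.
    by rewrite lerD2l; apply: hm1; lia.
  have := q0 i; have := q0 (i + 1).
  by case: (a i) ge1 alt; case: (s i); case: (leP 1 (q (i + 1))) => /=; lia.
have F : forall x, height (dep R a s) x - height a x = 2 * (q 1 - q (x + 1)).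
  move=> y.
  pose G := fun x => height (dep R a s) x - height a x - 2 * (q 1 - q (x + 1)).
  suff : G y = 0 by rewrite /G; lia.
  rewrite (@int_const G) /G ?height0; first by rewrite (add0r 1) subrr; ring.
  move=> x0; rewrite !height_step.
  have k := key (x0 + 1).
  have -> : q (x0 + 1 + 1) = q (x0 + 1) - ((a (x0 + 1))%:Z - (dep R a s (x0 + 1))%:Z) by rewrite -k; ring.
  ring.
have S1 : ereal_sup [set (((height s j - height a j)%:~R : R)%:E) | j in [set j : int | (0 <= j)%R]]
    = (((2 * q 1)%:~R : R))%:E.
  have [[j hj e] hm] := hq 1.
  have E : forall j, 0 <= j -> height s j - height a j = 2 * AS a s 1 j.
    by move=> k hk; have := @hAS a s 0 k hk; rewrite !height0 !subr0 (add0r 1).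
  apply: esup_att.
    by exists j => //=; rewrite E ?e.
  by move=> k /= hk; rewrite E // ler_pM2l // hm.
have S2 : ereal_sup [set (((height s j - height s x - (height a j - height a x))%:~R : R)%:E)
                     | j in [set j : int | (x <= j)%R]] = (((2 * q (x + 1))%:~R : R))%:E.
  have [[j hj e] hm] := hq (x + 1).
  apply: esup_att.
    exists j => /=; first by lia.
    by rewrite (@hAS a s x j) ?e //; lia.
  by move=> k /= hk; rewrite (@hAS a s x k) // ler_pM2l // hm //; lia.
rewrite S1 S2 -EFinD; congr (_%:E); rewrite -intrD -intrB; congr (_%:~R).
have := F x; lia.
Qed.

Set Implicit Arguments. Unset Strict Implicit. Unset Printing Implicit Defensive.

Definition pr (R : numDomainType) (b : bool) (x : R) : R := if b then x else 1 - x.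

Definition cyl (T : Type) (a s : int -> T -> bool) (j : nat) (b : {ffun 'I_j -> bool * bool}) : set T :=
  [set w | forall k : 'I_j, a (1 + k%:Z) w = (b k).1 /\ s (1 + k%:Z) w = (b k).2].

Definition Jseq (j : nat) : seq (int + int) :=
  [seq inl (1 + (k : nat)%:Z) | k : 'I_j <- enum 'I_j] ++ [seq inr (1 + (k : nat)%:Z) | k : 'I_j <- enum 'I_j].

Definition bb (j : nat) (b : {ffun 'I_j -> bool * bool}) (x : int + int) : bool :=
  match x with
  | inl i => [exists k : 'I_j, (1 + (k : nat)%:Z == i) && (b k).1]
  | inr i => [exists k : 'I_j, (1 + (k : nat)%:Z == i) && (b k).2]
  end.
Arguments bb {j} b x.
Arguments cyl {T} a s {j} b.

Lemma bb_inl j b (k : 'I_j) : bb b (inl (1 + (k : nat)%:Z)) = (b k).1.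
Proof.
apply/existsP/idP => [[k' /andP[/eqP e h]]|h]; last by exists k; rewrite eqxx.
have -> : k = k' by apply: ord_inj; lia.
by [].
Qed.

Lemma bb_inr j b (k : 'I_j) : bb b (inr (1 + (k : nat)%:Z)) = (b k).2.
Proof.
apply/existsP/idP => [[k' /andP[/eqP e h]]|h]; last by exists k; rewrite eqxx.
have -> : k = k' by apply: ord_inj; lia.
by [].
Qed.

Lemma Jseq_uniq j : uniq (Jseq j).
Proof.
rewrite cat_uniq !map_inj_uniq.
- rewrite -enumT enum_uniq /= andbT.
  apply/hasPn => x /mapP [k _ ->]; apply/negP => /mapP [k' _] //.
all: move=> k k'. all: try exact: id. all: move=> e; have /= e' := congr1 (fun x : int + int => match x with inl i | inr i => i end) e; apply: ord_inj; lia.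
Qed.

Definition XX (T : Type) (a s : int -> T -> bool) (k : int + int) : T -> bool :=
  match k with inl i => a i | inr i => s i end.
Arguments XX {T} a s k.

Lemma cylE (T : Type) (a s : int -> T -> bool) j (b : {ffun 'I_j -> bool * bool}) :
  cyl a s b = \bigcap_(i in [set` Jseq j]) [set w | XX a s i w = bb b i].
Proof.
apply/seteqP; split => w /=.
  move=> H i; rewrite /= mem_cat => /orP [] /mapP [k _ ->] /=.
    by have := bb_inl b k; rewrite /= => ->; case: (H k).
  by have := bb_inr b k; rewrite /= => ->; case: (H k).
move=> H k; split.
  have := H (inl (1 + (k : nat)%:Z)); rewrite bb_inl /=; apply.
  by rewrite mem_cat; apply/orP; left; apply/mapP; exists k => //; rewrite mem_enum.
have := H (inr (1 + (k : nat)%:Z)); rewrite bb_inr /=; apply.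
by rewrite mem_cat; apply/orP; right; apply/mapP; exists k => //; rewrite mem_enum.
Qed.

Lemma mbool d (T : measurableType d) (f : T -> bool) (b : bool) :
  measurable [set w | f w] -> measurable [set w | f w = b].
Proof.
move=> mf; case: b => //.
have -> : [set w | f w = false] = ~` [set w | f w].
  by apply/seteqP; split => w /=; case: (f w).
exact: measurableC.
Qed.

Lemma Pbool d (T : measurableType d) (R : realType) (P : probability T R)
  (f : T -> bool) (x : R) (b : bool) :
  measurable [set w | f w] -> P [set w | f w] = x%:E -> P [set w | f w = b] = (pr b x)%:E.
Proof.
move=> mf Pf; case: b => //.
have -> : [set w | f w = false] = ~` [set w | f w].
  by apply/seteqP; split => w /=; case: (f w).
by rewrite probability_setC // Pf.
Qed.

Lemma Pcyl d (T : measurableType d) (R : realType) (P : probability T R)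
  (a s : int -> T -> bool) (p q : R) :
  (forall i, measurable [set w | a i w]) ->
  (forall i, measurable [set w | s i w]) ->
  (forall i, P [set w | a i w] = p%:E) ->
  (forall i, P [set w | s i w] = q%:E) ->
  indep_bool_family P (XX a s) ->
  forall j (b : {ffun 'I_j -> bool * bool}),
  P (cyl a s b) = (\prod_(k < j) (pr (b k).1 p * pr (b k).2 q))%:E.
Proof.
move=> ma ms pa ps hind j b.
rewrite cylE hind ?Jseq_uniq // /Jseq big_cat !big_map.
have H1 : forall k : 'I_j, P [set w | XX a s (inl (1 + (k : nat)%:Z)) w = bb b (inl (1 + (k : nat)%:Z))] = (pr (b k).1 p)%:E.
  by move=> k; rewrite bb_inl; apply: Pbool; [exact: ma | exact: pa].
have H2 : forall k : 'I_j, P [set w | XX a s (inr (1 + (k : nat)%:Z)) w = bb b (inr (1 + (k : nat)%:Z))] = (pr (b k).2 q)%:E.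
  by move=> k; rewrite bb_inr; apply: Pbool; [exact: ms | exact: ps].
rewrite (eq_bigr _ (fun k _ => H1 k)) (eq_bigr _ (fun k _ => H2 k)) /=.
rewrite !prodEFin -EFinM -big_split /=.
by rewrite -enumT big_enum.
Qed.

Definition goodb j (b : {ffun 'I_j -> bool * bool}) :=
  (\sum_(k < j) ((b k).2 : nat) <= \sum_(k < j) ((b k).1 : nat))%N.

Definition U (T : Type) (a s : int -> T -> bool) (j : nat) : set T :=
  \big[setU/set0]_(i < #|{: {ffun 'I_j -> bool * bool}}|)
     (if goodb (enum_val i) then cyl a s (enum_val i) else set0).

Lemma cyl_meas d (T : measurableType d) (a s : int -> T -> bool) j (b : {ffun 'I_j -> bool * bool}) :
  (forall i, measurable [set w | a i w]) ->
  (forall i, measurable [set w | s i w]) ->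
  measurable (cyl a s b).
Proof.
move=> ma ms; rewrite cylE bigcap_seq; apply: bigsetI_measurable => -[i|i] _ /=;
  by apply: mbool.
Qed.

Lemma U_meas d (T : measurableType d) (a s : int -> T -> bool) j :
  (forall i, measurable [set w | a i w]) ->
  (forall i, measurable [set w | s i w]) ->
  measurable (U a s j).
Proof.
move=> ma ms; apply: bigsetU_measurable => i _; case: ifP => _ //.
exact: cyl_meas.
Qed.

Lemma U_bound d (T : measurableType d) (R : realType) (P : probability T R)
  (a s : int -> T -> bool) (p q t : R) :
  0 <= p <= 1 -> 0 <= q <= 1 -> 1 <= t ->
  (forall i, measurable [set w | a i w]) ->
  (forall i, measurable [set w | s i w]) ->
  (forall i, P [set w | a i w] = p%:E) ->
  (forall i, P [set w | s i w] = q%:E) ->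
  indep_bool_family P (XX a s) ->
  forall j, (P (U a s j) <= ((((1 - p) + p * t) * ((1 - q) + q * t^-1)) ^+ j)%:E)%E.
Proof.
move=> /andP[p0 p1] /andP[q0 q1] t1 ma ms pa ps hind j.
have t0 : 0 < t by apply: lt_le_trans t1.
rewrite /U measure_bigsetU_ord; first last.
- move=> i i' _ _ [w [H1 H2]]; apply: enum_val_inj.
  move: H1 H2; case: ifP => _ // H1; case: ifP => _ // H2.
  apply/ffunP => k; move: (H1 k) (H2 k).
  by case: (enum_val i k) => x1 y1; case: (enum_val i' k) => x2 y2 /= [<- <-] [<- <-].
- by move=> i; case: ifP => _ //; exact: cyl_meas.
pose W (b : {ffun 'I_j -> bool * bool}) := \prod_(k < j) (pr (b k).1 p * pr (b k).2 q).
rewrite (eq_bigr (fun i => (if goodb (enum_val i) then W (enum_val i) else 0)%:E)); last first.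
  by move=> i _; case: ifP => _; [exact: Pcyl | exact: measure0].
rewrite sumEFin lee_fin.
pose f (be : bool * bool) := pr be.1 p * pr be.2 q * (t ^+ be.1 * t^-1 ^+ be.2).
have prge0 : forall (be : bool) (x : R), 0 <= x <= 1 -> 0 <= pr be x.
  by move=> [] x /andP[x0 x1] //=; rewrite subr_ge0.
have W0 : forall b, 0 <= W b.
  move=> b; apply: prodr_ge0 => k _; apply: mulr_ge0; apply: prge0; apply/andP; split => //.
apply: (@le_trans _ _ (\sum_(i < #|{: {ffun 'I_j -> bool * bool}}|) \prod_(k < j) f (enum_val i k))).
  apply: ler_sum => i _.
  set b := enum_val i.
  have E : \prod_(k < j) f (b k) = W b * (t ^+ (\sum_(k < j) ((b k).1 : nat)) * t^-1 ^+ (\sum_(k < j) ((b k).2 : nat))).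
    by rewrite /f /W !big_split /= -!prodrXr.
  case: ifP => g.
    rewrite E; apply: ler_peMr => //.
    move: g; rewrite /goodb; set A := (\sum_(k < j) _)%N; set S := (\sum_(k < j) _)%N => g.
    rewrite -(subnK g) exprD exprVn mulfK; first exact: exprn_ege1.
    by rewrite expf_neq0 // gt_eqF.
  apply: prodr_ge0 => k _; rewrite /f; apply: mulr_ge0; first by apply: mulr_ge0; apply: prge0; apply/andP.
  by apply: mulr_ge0; apply: exprn_ge0; rewrite ?invr_ge0 ltW.
rewrite -(big_enum_val (fun b : {ffun 'I_j -> bool * bool} => \prod_(k < j) f (b k))).
rewrite (eq_bigl (fun _ => true)) //.
rewrite -(bigA_distr_bigA (fun (k : 'I_j) be => f be)) /=.
have -> : \sum_be f be = (1 - p + p * t) * (1 - q + q / t).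
  rewrite -(pair_bigA _ (fun b1 b2 => f (b1, b2))) /= !big_bool /f /=.
  rewrite !expr0 !expr1; ring.
by rewrite prodr_const card_ord.
Qed.

Lemma sumPosz n (F : 'I_n -> nat) : (\sum_(k < n) F k)%N%:Z = \sum_(k < n) (F k)%:Z.
Proof. by elim/big_rec2: _ => // i x y _ <-; rewrite PoszD. Qed.

Lemma AS_sum (a s : int -> bool) (j : nat) :
  AS a s 1 j%:Z = (\sum_(k < j) (a (1 + (k : nat)%:Z)%R : nat))%N%:Z
                  - (\sum_(k < j) (s (1 + (k : nat)%:Z)%R : nat))%N%:Z.
Proof.
rewrite /AS !sumPosz.
have E : forall f : int -> int, isum f 1 j%:Z = \sum_(k < j) f (1 + (k : nat)%:Z).
  by move=> f; rewrite -isum_nat addrAC subrr add0r.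
by rewrite !E.
Qed.

Lemma cover (T : Type) (a s : int -> T -> bool) (j : nat) (w : T) :
  0 <= AS (fun i => a i w) (fun i => s i w) 1 j%:Z -> U a s j w.
Proof.
move=> h.
set b := [ffun k : 'I_j => (a (1 + (k : nat)%:Z) w, s (1 + (k : nat)%:Z) w)].
rewrite /U (bigD1 (enum_rank b)) //=; left; rewrite enum_rankK.
have -> : goodb b.
  rewrite /goodb; move: h; rewrite AS_sum subr_ge0 lez_nat => h.
  rewrite [X in (X <= _)%N](eq_bigr (fun k : 'I_j => (s (1 + (k : nat)%:Z) w : nat))); last by move=> k _; rewrite /b ffunE.
  rewrite [X in (_ <= X)%N](eq_bigr (fun k : 'I_j => (a (1 + (k : nat)%:Z) w : nat))); last by move=> k _; rewrite /b ffunE.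
  by [].
by move=> k; rewrite /b ffunE.
Qed.

Unset Implicit Arguments.

Theorem lemma5p3 (d : measure_display) (T : measurableType d) (R : realType)
  (P : probability T R) (rho1 rho2 : R)
  (a s : int -> T -> bool) :
  0 < rho1 < 1 -> 0 < rho2 < 1 - rho1 ->
  (forall i, measurable [set w | a i w]) ->
  (forall i, measurable [set w | s i w]) ->
  (forall i, P [set w | a i w] = rho1%:E) ->
  (forall i, P [set w | s i w] = (rho1 + rho2)%:E) ->
  indep_bool_family P
    (fun k : int + int => match k with inl i => a i | inr i => s i end) ->
  {ae P, forall w, forall x : int,
    let aw := fun i => a i w in
    let sw := fun i => s i w in
    let h1 := height (dep R aw sw) in
    let h12 := height sw in
    let hh1 := height aw in
    (((h1 x)%:~R : R)%:E =
       ((hh1 x)%:~R : R)%:E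
       + ereal_sup [set (((h12 j - hh1 j)%:~R : R)%:E) | j in [set j : int | (0 <= j)%R]]
       - ereal_sup [set (((h12 j - h12 x - (hh1 j - hh1 x))%:~R : R)%:E)
                     | j in [set j : int | (x <= j)%R]])%E}.
Proof.
move=> /andP[r10 r11] /andP[r20 r21] ma ms pa ps hind.
have q1 : 0 < 1 - (rho1 + rho2) by lra.
pose e := rho2 / (2 * rho1 * (1 - (rho1 + rho2))).
have e0 : 0 < e by apply: divr_gt0 => //; apply: mulr_gt0 => //; apply: mulr_gt0.
have pe : rho1 * (1 - (rho1 + rho2)) * e = rho2 / 2.
  by rewrite /e; field; rewrite !gt_eqF.
pose t := 1 + e.
have t1 : 1 <= t by rewrite /t; lra.
have t0 : 0 < t by rewrite /t; lra.
pose c := (1 - rho1 + rho1 * t) * (1 - (rho1 + rho2) + (rho1 + rho2) * t^-1).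
have c0 : 0 < c.
  rewrite /c; apply: mulr_gt0.
    by rewrite /t; nra.
  rewrite -(addr0 0); apply: ltr_leD => //; apply: mulr_ge0; rewrite ?invr_ge0 ?ltW //; lra.
have c1 : c < 1.
  have ct : c * t = 1 + e * (rho1 + 1 - (rho1 + rho2)) + e * (rho1 * (1 - (rho1 + rho2)) * e).
    by rewrite /c /t; field; rewrite gt_eqF.
  rewrite pe in ct.
  have : c * t < 1 * t.
    rewrite ct mul1r /t.
    nra.
  by rewrite ltr_pM2r.
have hU : forall j, (P (U a s j) <= (c ^+ j)%:E)%E.
  by apply: U_bound => //; apply/andP; split; lra.
have mU : forall j, measurable (U a s j) by move=> j; exact: U_meas.
pose Nset := \bigcap_(J in [set: nat]) \bigcup_(j in ~` `I_J) U a s j.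
have mN : measurable Nset.
  by apply: bigcap_measurableType => J _; apply: bigcup_measurable => j _; exact: mU.
exists Nset; split => //.
- apply/eqP; rewrite eq_le measure_ge0 andbT.
  apply/lee_addgt0Pr => eps eps0; rewrite add0e.
  have cabs : `|c| < 1 by rewrite gtr0_norm.
  have cg := @cvg_geometric R (1 / (1 - c)) c cabs.
  move: cg => /cvgr0_norm_lt/(_ _ eps0).
  case=> J _ HJ.
  have hJ := HJ J (leqnn J).
  have sub : Nset `<=` \bigcup_(n in ~` `I_J) U a s n by move=> w /(_ J I).
  apply: le_trans (measure_sigma_subadditive_tail P mU mN sub) _.
  apply: le_trans (@lee_nneseries _ _ (fun n => (c ^+ n)%:E) xpredT J _ _) _.
  + by move=> n _ _; exact: measure_ge0.
  + by move=> n _; exact: hU.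
  have gJ : 1 / (1 - c) * c ^+ J <= eps.
    by move: hJ => /= hJ; apply: ltW (le_lt_trans (ler_norm _) hJ).
  apply: le_trans (_ : (_ <= ((1 / (1 - c)) * c ^+ J)%:E)%E) _; last by rewrite lee_fin.
  apply: lime_le.
    by apply: is_cvg_nneseries => n _ _; rewrite lee_fin exprn_ge0 // ltW.
  apply: nearW => m; rewrite sumEFin lee_fin.
  have a0 : 0 <= 1 / (1 - c) by rewrite div1r invr_ge0 subr_ge0 ltW.
  case: (leqP m J) => hm.
    by rewrite big_geq //; apply: mulr_ge0 => //; rewrite exprn_ge0 // ltW.
  rewrite -(subnKC (ltnW hm)) geometric_partial_tail.
  apply: le_trans (geometric_le_lim _ _ _ _) _ => //.
  - by rewrite exprn_ge0 // ltW.
  by rewrite div1r mulrC.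
- move=> w /= nG.
  case: (pselect (Nset w)) => // nN; exfalso; apply: nG.
  have [J hJ] : exists J, ~ (\bigcup_(j in ~` `I_J) U a s j) w.
    apply/existsNP => H; apply: nN => J _; exact: H.
  have HJ : forall j : nat, (J <= j)%N -> AS (fun i => a i w) (fun i => s i w) 1 j%:Z < 0.
    move=> j hj; rewrite ltNge; apply/negP => h0; apply: hJ; exists j.
      by rewrite /=; apply/negP; rewrite -leqNgt.
    exact: cover.
  move=> x; exact: (@det_main R _ _ J HJ x).
Qed.
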